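(* Let $X=\mathbb{R}^{\mathcal N}$ with the Euclidean inner product $\langle u,v\rangle=u^t v$. Let $\mathcal P\subset\mathbb{R}^p$ and let $\mu$ be a random variable with values in $\mathcal P$. For each $\mu\in\mathcal P$ let $A(\mu)$ be an invertible $\mathcal N\times\mathcal N$ matrix and $f(\mu)\in X$, let $l\in X$, and let $Z$ be an $\mathcal N\times n$ matrix such that $Z^tA(\mu)Z$ is invertible for every $\mu$. Let $u(\mu)$ solve $A(\mu)u(\mu)=f(\mu)$, let $\widetilde u(\mu)$ solve $Z^tA(\mu)Z\,\widetilde u(\mu)=Z^tf(\mu)$, and set $s(\mu)=\langle l,u(\mu)\rangle$, $\widetilde s(\mu)=\langle l,Z\widetilde u(\mu)\rangle$, $r(\mu)=A(\mu)Z\widetilde u(\mu)-f(\mu)$, $w(\mu)=A(\mu)^{-t}l$. Let $\Phi=\{\phi_1,\dots,\phi_{\mathcal N}\}$ be any orthonormal basis of $X$ (with the convention $\phi_i=0$ for $i>\mathcal N$), and let $\{\mathcal P_1,\dots,\mathcal P_K\}$ be a partition of $\mathcal P$; for $\mu\in\mathcal P$ let $k(\mu)$ be the unique $k$ with $\mu\in\mathcal P_k$. Let $N\in\mathbb{N}^*$. For $i=1,\dots,N$ put $D_i(\mu,\Phi)=\langle w(\mu),\phi_i\rangle$, and for $k=1,\dots,K$ put $\beta^{min}_{i,k}(\Phi)=\min_{\mu\in\mathcal P_k}D_i(\mu,\Phi)$ and $\beta^{max}_{i,k}(\Phi)=\max_{\mu\in\mathcal P_k}D_i(\mu,\Phi)$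 (assumed to exist). Define $\beta_i^{up}(\mu,\Phi)=\beta^{max}_{i,k(\mu)}(\Phi)$ if $\langle r(\mu),\phi_i\rangle>0$ and $\beta^{min}_{i,k(\mu)}(\Phi)$ otherwise; and $\beta_i^{low}(\mu,\Phi)=\beta^{min}_{i,k(\mu)}(\Phi)$ if $\langle r(\mu),\phi_i\rangle>0$ and $\beta^{max}_{i,k(\mu)}(\Phi)$ otherwise. Set $T_1^{low}(\mu,N,\Phi)=\sum_{i=1}^N\langle r(\mu),\phi_i\rangle\beta_i^{low}(\mu,\Phi)$, $T_1^{up}(\mu,N,\Phi)=\sum_{i=1}^N\langle r(\mu),\phi_i\rangle\beta_i^{up}(\mu,\Phi)$, $T_1(\mu,N,\Phi)=\max(|T_1^{low}(\mu,N,\Phi)|,|T_1^{up}(\mu,N,\Phi)|)$, and $T_2(N,\Phi)=\mathbf{E}_\mu\left(\left|\sum_{i>N}\langle w(\mu),\phi_i\rangle\langle r(\mu),\phi_i\rangle\right|\right)$ (assumed finite). Then for every $\alpha\in\,]0,1[$ and every $N\in\mathbb{N}^*$, $$P\left(|s(\mu)-\widetilde s(\mu)|>T_1(\mu,N,\Phi)+\frac{T_2(N,\Phi)}{\alpha}\right)\le\alpha.$$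
   Context: All maps of $\mu$ involved are assumed measurable so that the probability and expectation make sense; the probability and expectation are with respect to the distribution of the random parameter $\mu$. $M^t$ denotes the transpose of a matrix $M$ and $A(\mu)^{-t}$ the inverse of the transpose. *)

(* Defs.v *)
From mathcomp Require Import all_boot all_order all_algebra.
From mathcomp Require Import all_classical all_reals all_analysis.
Set Implicit Arguments. Unset Strict Implicit. Unset Printing Implicit Defensive.
Import Order.TTheory GRing.Theory Num.Theory.
Local Open Scope ring_scope.
Local Open Scope classical_set_scope.

Section RB.
Variable R : realType.

Definition ip (m : nat) (u v : 'cV[R]_m) : R := (u^T *m v) ord0 ord0.

(* phi_i extended by 0 for indices >= Nn (0-based indexing: paper's phi_{i+1}) *)
Definition phiext (m : nat) (phi : 'I_m -> 'cV[R]_m) (i : nat) : 'cV[R]_m :=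
  oapp phi 0 (insub i).

Variables (Nn n : nat) (Par : Type).
Variables (A : Par -> 'M[R]_Nn) (f : Par -> 'cV[R]_Nn) (l : 'cV[R]_Nn)
          (Z : 'M[R]_(Nn, n)).

Definition usol (mu : Par) : 'cV[R]_Nn := invmx (A mu) *m f mu.
Definition ured (mu : Par) : 'cV[R]_n := invmx (Z^T *m A mu *m Z) *m (Z^T *m f mu).
Definition sout (mu : Par) : R := ip l (usol mu).
Definition sred (mu : Par) : R := ip l (Z *m ured mu).
Definition resid (mu : Par) : 'cV[R]_Nn := A mu *m Z *m ured mu - f mu.
Definition wdual (mu : Par) : 'cV[R]_Nn := invmx ((A mu)^T) *m l.

Variables (phi : 'I_Nn -> 'cV[R]_Nn) (K : nat) (Pk : 'I_K -> set Par)
          (kf : Par -> 'I_K).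

Definition Dcoef (i : nat) (mu : Par) : R := ip (wdual mu) (phiext phi i).
Definition betamin (i : nat) (k : 'I_K) : R := inf [set Dcoef i mu | mu in Pk k].
Definition betamax (i : nat) (k : 'I_K) : R := sup [set Dcoef i mu | mu in Pk k].

Definition beta_up (i : nat) (mu : Par) : R :=
  if 0 < ip (resid mu) (phiext phi i) then betamax i (kf mu) else betamin i (kf mu).
Definition beta_low (i : nat) (mu : Par) : R :=
  if 0 < ip (resid mu) (phiext phi i) then betamin i (kf mu) else betamax i (kf mu).

Definition T1low (mu : Par) (N : nat) : R :=
  \sum_(0 <= i < N) ip (resid mu) (phiext phi i) * beta_low i mu.
Definition T1up (mu : Par) (N : nat) : R :=
  \sum_(0 <= i < N) ip (resid mu) (phiext phi i) * beta_up i mu.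
Definition T1 (mu : Par) (N : nat) : R := Num.max `|T1low mu N| `|T1up mu N|.

(* sum_{i > N} <w,phi_i><r,phi_i> (paper 1-based); finite since phi_i = 0 for i > Nn *)
Definition tailsum (mu : Par) (N : nat) : R :=
  \sum_(N <= i < maxn N Nn) ip (wdual mu) (phiext phi i) * ip (resid mu) (phiext phi i).

End RB.

(* Main.v *)
Require Import Defs.
From mathcomp Require Import all_boot all_order all_algebra.
From mathcomp Require Import all_classical all_reals all_analysis measurable_realfun.
Import Order.TTheory GRing.Theory Num.Theory.
Local Open Scope ring_scope.
Local Open Scope classical_set_scope.

Lemma ipE (R : realType) m (u v : 'cV[R]_m) : ip u v = \sum_a u a ord0 * v a ord0.
Proof. by rewrite /ip mxE; apply: eq_bigr => a _; rewrite mxE. Qed.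

Lemma ipC (R : realType) m (u v : 'cV[R]_m) : ip u v = ip v u.
Proof. by rewrite !ipE; apply: eq_bigr => a _; rewrite mulrC. Qed.

Lemma ip_dual (R : realType) Nn n Par (A : Par -> 'M[R]_Nn) f l (Z : 'M[R]_(Nn,n)) m :
  A m \in unitmx ->
  sout A f l m - sred A f l Z m = - ip (wdual A l m) (resid A f Z m).
Proof.
move=> uA; rewrite /sout /sred /wdual /resid /ip /usol.
by rewrite trmx_mul -trmx_inv trmxK mulmxBr -!mulmxA mulKmx // !mxE opprB. Qed.


Lemma ip_expand (R : realType) m (phi : 'I_m -> 'cV[R]_m) (u v : 'cV[R]_m) :
  (forall i j : 'I_m, ip (phi i) (phi j) = (i == j)%:R) ->
  ip u v = \sum_(i < m) ip u (phi i) * ip v (phi i).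
Proof.
move=> on.
pose P : 'M[R]_m := \matrix_(a, j) phi j a ord0.
have PtP : P^T *m P = 1%:M.
  apply/matrixP => i j; rewrite !mxE -on ipE; apply: eq_bigr => a _.
  by rewrite !mxE.
have PPt := mulmx1C PtP.
have -> : ip u v = ip u (P *m P^T *m v) by rewrite PPt mul1mx.
rewrite /ip -(mulmxA P) mulmxA [in LHS]mxE; apply: eq_bigr => j _.
congr (_ * _); rewrite !mxE; apply: eq_bigr => a _; rewrite !mxE //.
by rewrite mulrC.
Qed.

Lemma phiext_ord (R : realType) m (phi : 'I_m -> 'cV[R]_m) (i : 'I_m) :
  phiext phi i = phi i.
Proof. by rewrite /phiext valK. Qed.

Lemma phiext_big (R : realType) m (phi : 'I_m -> 'cV[R]_m) (i : nat) :
  (m <= i)%N -> phiext phi i = 0.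
Proof. by move=> h; rewrite /phiext insubN // -leqNgt. Qed.

Lemma ip0 (R : realType) m (u : 'cV[R]_m) : ip u 0 = 0.
Proof. by rewrite ipE big1 // => a _; rewrite mxE mulr0. Qed.

Lemma split_sum (R : realType) Nn (phi : 'I_Nn -> 'cV[R]_Nn) (w r : 'cV[R]_Nn) N :
  \sum_(i < Nn) ip w (phi i) * ip r (phi i) =
  \sum_(0 <= i < N) ip w (phiext phi i) * ip r (phiext phi i) +
  \sum_(N <= i < maxn N Nn) ip w (phiext phi i) * ip r (phiext phi i).
Proof.
rewrite -big_cat_nat ?leq_maxl //.
rewrite (big_cat_nat _ (n := Nn)) ?leq_maxr //=.
rewrite [X in _ = _ + X]big_nat_cond [X in _ = _ + X]big1 ?addr0; last first.
  by move=> i /andP[/andP[h _] _]; rewrite phiext_big // ip0 mul0r.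
by rewrite big_mkord; apply: eq_bigr => i _; rewrite phiext_ord.
Qed.

Lemma abs_between (R : realType) (lo x up : R) :
  lo <= x -> x <= up -> `|x| <= Num.max `|lo| `|up|.
Proof.
move=> h1 h2; rewrite le_max; have [x0|x0] := leP 0 x.
  by rewrite ger0_norm // (le_trans h2 (ler_norm _)) orbT.
rewrite ltr0_norm //; apply/orP; left; rewrite ler_normr; apply/orP; right.
by rewrite lerN2.
Qed.

Lemma head_bound (R : realType) Nn n Par (A : Par -> 'M[R]_Nn) f l (Z : 'M[R]_(Nn,n))
  phi K (Pk : 'I_K -> set Par) kf N m :
  Pk (kf m) m ->
  (forall (i : nat) (k : 'I_K), (i < N)%N ->
     exists2 m0, Pk k m0 & forall m, Pk k m -> Dcoef A l phi i m0 <= Dcoef A l phi i m) ->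
  (forall (i : nat) (k : 'I_K), (i < N)%N ->
     exists2 m0, Pk k m0 & forall m, Pk k m -> Dcoef A l phi i m <= Dcoef A l phi i m0) ->
  `| \sum_(0 <= i < N) ip (wdual A l m) (phiext phi i) * ip (resid A f Z m) (phiext phi i) |
   <= T1 A f l Z phi Pk kf m N.
Proof.
move=> hm hmin hmax; apply: abs_between.
  apply: ler_sum_nat => i /andP[_ iN].
  rewrite [X in _ <= X]mulrC /beta_low.
  have [m0 Pm0 H0] := hmin i (kf m) iN.
  have [m1 Pm1 H1] := hmax i (kf m) iN.
  have lb : betamin A l phi Pk i (kf m) <= Dcoef A l phi i m.
    apply: ge_inf; last by exists m.
    exists (Dcoef A l phi i m0) => _ [x Px <-]; exact: H0.
  have ub : Dcoef A l phi i m <= betamax A l phi Pk i (kf m).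
    apply: ub_le_sup; last by exists m.
    exists (Dcoef A l phi i m1) => _ [x Px <-]; exact: H1.
  case: ifP => hr.
    by apply: ler_wpM2l => //; exact: ltW.
  by apply: ler_wnM2l => //; rewrite leNgt hr.
apply: ler_sum_nat => i /andP[_ iN].
rewrite [X in X <= _]mulrC /beta_up.
have [m0 Pm0 H0] := hmin i (kf m) iN.
have [m1 Pm1 H1] := hmax i (kf m) iN.
have lb : betamin A l phi Pk i (kf m) <= Dcoef A l phi i m.
  apply: ge_inf; last by exists m.
  exists (Dcoef A l phi i m0) => _ [x Px <-]; exact: H0.
have ub : Dcoef A l phi i m <= betamax A l phi Pk i (kf m).
  apply: ub_le_sup; last by exists m.
  exists (Dcoef A l phi i m1) => _ [x Px <-]; exact: H1.
case: ifP => hr.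
  by apply: ler_wpM2l => //; exact: ltW.
by apply: ler_wnM2l => //; rewrite leNgt hr.
Qed.

Lemma det_bound (R : realType) Nn n Par (A : Par -> 'M[R]_Nn) f l (Z : 'M[R]_(Nn,n))
  phi K (Pk : 'I_K -> set Par) kf N m :
  A m \in unitmx ->
  (forall i j : 'I_Nn, ip (phi i) (phi j) = (i == j)%:R) ->
  Pk (kf m) m ->
  (forall (i : nat) (k : 'I_K), (i < N)%N ->
     exists2 m0, Pk k m0 & forall m, Pk k m -> Dcoef A l phi i m0 <= Dcoef A l phi i m) ->
  (forall (i : nat) (k : 'I_K), (i < N)%N ->
     exists2 m0, Pk k m0 & forall m, Pk k m -> Dcoef A l phi i m <= Dcoef A l phi i m0) ->
  `|sout A f l m - sred A f l Z m| <= T1 A f l Z phi Pk kf m N + `|tailsum A f l Z phi m N|.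
Proof.
move=> uA on hm hmin hmax.
rewrite ip_dual // normrN (@ip_expand _ _ phi _ _ on) (@split_sum _ _ phi _ _ N).
apply: (le_trans (ler_normD _ _)); apply: lerD; last by [].
exact: head_bound.
Qed.
Theorem theorem1 (R : realType) (d : measure_display) (T : measurableType d)
  (Prob : probability T R)
  (Nn n p : nat) (Pset : set 'cV[R]_p) (mu : T -> 'cV[R]_p)
  (A : 'cV[R]_p -> 'M[R]_Nn) (f : 'cV[R]_p -> 'cV[R]_Nn) (l : 'cV[R]_Nn)
  (Z : 'M[R]_(Nn, n))
  (phi : 'I_Nn -> 'cV[R]_Nn) (K : nat) (Pk : 'I_K -> set 'cV[R]_p)
  (kf : 'cV[R]_p -> 'I_K) (N : nat) (alpha : R) :
  (forall w, Pset (mu w)) ->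
  (forall m, Pset m -> A m \in unitmx) ->
  (forall m, Pset m -> Z^T *m A m *m Z \in unitmx) ->
  (forall i j : 'I_Nn, ip (phi i) (phi j) = (i == j)%:R) ->
  (forall k, Pk k `<=` Pset) ->
  (forall k k', k != k' -> Pk k `&` Pk k' = set0) ->
  (forall m, Pset m -> Pk (kf m) m) ->
  (forall (i : nat) (k : 'I_K), (i < N)%N ->
     exists2 m0, Pk k m0 & forall m, Pk k m -> Dcoef A l phi i m0 <= Dcoef A l phi i m) ->
  (forall (i : nat) (k : 'I_K), (i < N)%N ->
     exists2 m0, Pk k m0 & forall m, Pk k m -> Dcoef A l phi i m <= Dcoef A l phi i m0) ->
  measurable_fun setT (fun w => `|sout A f l (mu w) - sred A f l Z (mu w)|) ->
  measurable_fun setT (fun w => T1 A f l Z phi Pk kf (mu w) N) ->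
  Prob.-integrable setT (fun w => (`|tailsum A f l Z phi (mu w) N|)%:E) ->
  0 < alpha < 1 -> (0 < N)%N ->
  (Prob [set w | (`|sout A f l (mu w) - sred A f l Z (mu w)| >
                T1 A f l Z phi Pk kf (mu w) N +
                fine (\int[Prob]_w (`|tailsum A f l Z phi (mu w) N|)%:E) / alpha)%R]
    <= alpha%:E)%E.
Proof.
move=> Pmu uA _ on _ _ hk hmin hmax mS mT1 iX /andP[a0 a1] N0.
pose X : T -> R := fun w => `|tailsum A f l Z phi (mu w) N|.
set E := fine _.
have mX : measurable_fun setT X.
  by apply/measurable_EFinP; exact: (measurable_int _ iX).
have X0 : forall w, 0 <= X w by move=> w; rewrite /X.
have intE : (\int[Prob]_w (X w)%:E = E%:E)%E.
  by rewrite fineK //; exact: integrable_fin_num.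
have E0 : 0 <= E by rewrite /E fine_ge0 // integral_ge0.
have Ssub : forall w, (T1 A f l Z phi Pk kf (mu w) N + E / alpha <
      `|sout A f l (mu w) - sred A f l Z (mu w)|) -> E / alpha < X w.
  move=> w h; rewrite -(ltrD2l (T1 A f l Z phi Pk kf (mu w) N)).
  apply: (lt_le_trans h); apply: det_bound; auto.
set S := [set w | _].
have mSet : measurable S.
  pose g := fun w => `|sout A f l (mu w) - sred A f l Z (mu w)| -
     (T1 A f l Z phi Pk kf (mu w) N + E / alpha).
  have mg : measurable_fun setT g.
    apply: measurable_funB => //; apply: measurable_funD => //.
  have := mg measurableT _ (measurable_itv `]0, +oo[%R).
  congr measurable; apply/seteqP; split => w /=.
    by move=> [_]; rewrite /g in_itv /= andbT subr_gt0.
  by move=> h; split => //; rewrite /g in_itv /= andbT subr_gt0.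
have mXE : measurable_fun setT (fun w => (X w)%:E) := measurable_int _ iX.
have [Epos|] := ltP 0 E; last first.
  move=> Ele; have {Ele E0} E00 : E = 0 by apply/le_anti; rewrite Ele E0.
  have : (\int[Prob]_(w in setT) `|(X w)%:E| = 0)%E.
    rewrite -[RHS]/(0%:E) -E00 -intE; apply: eq_integral => w _.
    by rewrite gee0_abs // lee_fin.
  move/(ae_eq_integral_abs Prob measurableT mXE).
  move=> [N1 [mN1 PN1 sub]].
  have SN1 : S `<=` N1.
    move=> w Sw; apply: sub => /= h.
    have := Ssub w Sw; rewrite E00 mul0r => Xp.
    by have := h I; move=> /(congr1 fine) /=; apply/eqP; rewrite gt_eqF.
  apply: le_trans (le_measure _ _ _ SN1) _; rewrite ?inE //.
  apply: (@le_trans _ _ 0%E); last by rewrite lee_fin ltW.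
  by rewrite le_eqVlt; apply/orP; left; apply/eqP; exact: PN1.
have c0 : 0 < E / alpha by rewrite divr_gt0.
have hB := le_integral_abse Prob measurableT mXE c0.
set B := (setT `&` _) in hB.
have mB : measurable B.
  have := mX measurableT _ (measurable_itv `[E / alpha, +oo[%R).
  congr measurable; apply/seteqP; split => w /=.
    move=> [_]; rewrite in_itv /= andbT => h; split => //=.
    by rewrite lee_fin ger0_norm.
  by move=> [_] /=; rewrite lee_fin ger0_norm // => h; split => //; rewrite in_itv /= h.
have SB : S `<=` B.
  move=> w Sw; split => //=; rewrite lee_fin ger0_norm //.
  exact: ltW (Ssub w Sw).
have hPB : (Prob B <= alpha%:E)%E.
  have e1 : (\int[Prob]_(x in setT) `|(X x)%:E| = E%:E)%E.
    rewrite -intE; apply: eq_integral => w _ /=.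
    by rewrite ger0_norm.
  rewrite e1 in hB.
  rewrite -(@lee_pmul2l _ (E / alpha)%:E) //.
  apply: (le_trans hB); have := EFinM (E / alpha) alpha; rewrite divfK ?gt_eqF // => h.
  by rewrite le_eqVlt; apply/orP; left; apply/eqP; exact: h.
apply: le_trans hPB.
by apply: le_measure; rewrite ?inE.
Qed.
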